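(* Let $\mathbf I=\langle I,\vee\rangle$ be a join-semilattice with order $\preceq$ (strict part $\prec$), let $\{\langle A_p,\le_p\rangle: p\in I\}$ be pairwise disjoint posets, and for $p\preceq q$ let $\psi_{pq},\varphi_{pq}:A_p\to A_q$ be monotone maps with $\varphi_{pp}=\psi_{pp}=\mathrm{id}_{A_p}$, $\varphi_{qr}\circ\varphi_{pq}=\varphi_{pr}$ and $\psi_{qr}\circ\psi_{pq}=\psi_{pr}$ for $p\preceq q\preceq r$. On $A:=\biguplus_pA_p$ define $a\le b$ (for $a\in A_p$, $b\in A_q$) iff $\varphi_{ps}(a)\le_s\psi_{qs}(b)$ where $s:=p\vee q$. Then $\le$ is a partial order on $A$ with $\le\cap A_p^2=\le_p$ for every $p\in I$ if and only if the following two conditions hold: (S1) whenever $p\prec q$, $p\prec r$ and $t:=q\vee r$, we have $\varphi_{qt}(\psi_{pq}(a))\le_t\psi_{rt}(\varphi_{pr}(a))$ for all $a\in A_p$; (S2) whenever $p\prec q$, $a,b\in A_p$ and $\varphi_{pq}(a)\le_q\psi_{pq}(b)$, then $a<_pb$. *)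

(* Defs.v *)
Definition is_join_semilattice {I : Type} (join : I -> I -> I) : Prop :=
  (forall p q r, join p (join q r) = join (join p q) r) /\
  (forall p q, join p q = join q p) /\
  (forall p, join p p = p).

Definition jle {I : Type} (join : I -> I -> I) (p q : I) : Prop := join p q = q.
Definition jlt {I : Type} (join : I -> I -> I) (p q : I) : Prop :=
  jle join p q /\ p <> q.

Definition is_partial_order {T : Type} (R : T -> T -> Prop) : Prop :=
  (forall x, R x x) /\
  (forall x y z, R x y -> R y z -> R x z) /\
  (forall x y, R x y -> R y x -> x = y).

Definition strict {T : Type} (R : T -> T -> Prop) (x y : T) : Prop :=
  R x y /\ x <> y.

Definition monotone {T U : Type} (R : T -> T -> Prop) (S : U -> U -> Prop)
  (f : T -> U) : Prop := forall x y, R x y -> S (f x) (f y).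

Definition sum_le {I : Type} (join : I -> I -> I) (A : I -> Type)
  (le : forall p, A p -> A p -> Prop)
  (phi psi : forall p q : I, A p -> A q)
  (x y : {p : I & A p}) : Prop :=
  le (join (projT1 x) (projT1 y))
     (phi (projT1 x) (join (projT1 x) (projT1 y)) (projT2 x))
     (psi (projT1 y) (join (projT1 x) (projT1 y)) (projT2 y)).

(* Main.v *)
Require Import Defs.
From Stdlib Require Import Classical.

Theorem theorem5p1
  (I : Type) (join : I -> I -> I) (HI : is_join_semilattice join)
  (A : I -> Type) (le : forall p, A p -> A p -> Prop)
  (Hle : forall p, is_partial_order (le p))
  (phi psi : forall p q : I, A p -> A q)
  (Hphi_mono : forall p q, jle join p q -> monotone (le p) (le q) (phi p q))
  (Hpsi_mono : forall p q, jle join p q -> monotone (le p) (le q) (psi p q))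
  (Hphi_id : forall p (a : A p), phi p p a = a)
  (Hpsi_id : forall p (a : A p), psi p p a = a)
  (Hphi_comp : forall p q r, jle join p q -> jle join q r ->
     forall a : A p, phi q r (phi p q a) = phi p r a)
  (Hpsi_comp : forall p q r, jle join p q -> jle join q r ->
     forall a : A p, psi q r (psi p q a) = psi p r a) :
  (is_partial_order (sum_le join A le phi psi) /\
   (forall p (a b : A p),
      sum_le join A le phi psi (existT _ p a) (existT _ p b) <-> le p a b))
  <->
  ((* (S1) *)
   (forall p q r, jlt join p q -> jlt join p r ->
      forall a : A p,
        le (join q r) (phi q (join q r) (psi p q a))
                      (psi r (join q r) (phi p r a))) /\
   (* (S2) *)
   (forall p q, jlt join p q ->
      forall a b : A p, le q (phi p q a) (psi p q b) -> strict (le p) a b)).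
Proof.
  destruct HI as [Hassoc [Hcomm Hidem]].
  set (R := sum_le join A le phi psi).
  assert (SL : forall p q s (e : join p q = s) (a : A p) (b : A q),
    R (existT _ p a) (existT _ q b) <-> le s (phi p s a) (psi q s b)).
  { intros; subst; unfold R, sum_le; simpl; tauto. }
  assert (Hrestr : forall p (a b : A p), R (existT _ p a) (existT _ p b) <-> le p a b).
  { intros. rewrite (SL p p p (Hidem p)). rewrite Hphi_id, Hpsi_id. tauto. }
  assert (Lrefl : forall p (x : A p), le p x x) by (intro p; apply (Hle p)).
  assert (Ltrans : forall p (x y z : A p), le p x y -> le p y z -> le p x z)
    by (intro p; apply (Hle p)).
  assert (jle_l : forall x y, jle join x (join x y)).
  { intros; unfold jle. rewrite Hassoc, Hidem. reflexivity. }
  assert (jle_r : forall x y, jle join y (join x y)).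
  { intros; unfold jle. rewrite (Hcomm x y). apply jle_l. }
  assert (jle_trans : forall x y z, jle join x y -> jle join y z -> jle join x z).
  { unfold jle; intros x y z H1 H2. rewrite <- H2, Hassoc, H1. reflexivity. }
  assert (jle_join : forall x y z, jle join x z -> jle join y z -> jle join (join x y) z).
  { unfold jle; intros x y z H1 H2. rewrite <- Hassoc, H2, H1. reflexivity. }
  split.
  - intros [[Hr [Ht Ha]] _]. split.
    + intros p q r [Hpq _] [Hpr _] a.
      assert (h1 : R (existT _ q (psi p q a)) (existT _ p a)).
      { apply (SL q p q); [rewrite Hcomm; exact Hpq|]. rewrite Hphi_id. apply Lrefl. }
      assert (h2 : R (existT _ p a) (existT _ r (phi p r a))).
      { apply (SL p r r Hpr). rewrite Hpsi_id. apply Lrefl. }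
      pose proof (Ht _ _ _ h1 h2) as h3.
      apply (SL q r (join q r) eq_refl) in h3. exact h3.
    + intros p q [Hpq Hne] a b H.
      assert (h1 : R (existT _ p a) (existT _ q (psi p q b))).
      { apply (SL p q q Hpq). rewrite Hpsi_id. exact H. }
      assert (h2 : forall c, R (existT _ q (psi p q c)) (existT _ p c)).
      { intro c. apply (SL q p q); [rewrite Hcomm; exact Hpq|]. rewrite Hphi_id. apply Lrefl. }
      split.
      * apply Hrestr. eapply Ht; [exact h1| apply h2].
      * intro Heq. subst b. pose proof (Ha _ _ h1 (h2 a)) as E.
        apply Hne. exact (f_equal (@projT1 _ _) E).
  - intros [S1 S2].
    assert (Refl : forall w t, jle join w t -> forall x y : A w,
               le t (phi w t x) (psi w t y) -> le w x y).
    { intros w t Hwt x y H. destruct (classic (w = t)) as [E|E].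
      - subst t. rewrite Hphi_id, Hpsi_id in H. exact H.
      - apply (S2 w t (conj Hwt E)) in H. apply H. }
    assert (S1' : forall p q r, jle join p q -> jle join p r -> forall a : A p,
        le (join q r) (phi q (join q r) (psi p q a)) (psi r (join q r) (phi p r a))).
    { intros p q r Hpq Hpr a.
      destruct (classic (p = q)) as [E|E].
      { subst q. rewrite Hpsi_id. unfold jle in Hpr. rewrite Hpr. rewrite Hpsi_id. apply Lrefl. }
      destruct (classic (p = r)) as [E'|E'].
      { subst r. rewrite Hphi_id. assert (J : join q p = q) by (rewrite Hcomm; exact Hpq).
        rewrite J. rewrite Hphi_id. apply Lrefl. }
      apply S1; split; assumption. }
    assert (PsiPhi : forall p q, jle join p q -> forall a : A p, le q (psi p q a) (phi p q a)).
    { intros p q Hpq a. pose proof (S1' p q q Hpq Hpq a) as H.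
      revert H. generalize (Hidem q). generalize (join q q).
      intros s e. subst s. rewrite Hphi_id, Hpsi_id. auto. }
    split; [|exact Hrestr].
    split; [|split].
    + intros [p a]. apply Hrestr. apply Lrefl.
    + intros [p a] [q b] [r c] H1 H2.
      apply (SL p q (join p q) eq_refl) in H1.
      apply (SL q r (join q r) eq_refl) in H2.
      apply (SL p r (join p r) eq_refl).
      set (s := join p q) in *. set (u := join q r) in *. set (w := join p r).
      set (t := join s u).
      assert (Hps : jle join p s) by apply jle_l.
      assert (Hqs : jle join q s) by apply jle_r.
      assert (Hqu : jle join q u) by apply jle_l.
      assert (Hru : jle join r u) by apply jle_r.
      assert (Hst : jle join s t) by apply jle_l.
      assert (Hut : jle join u t) by apply jle_r.
      assert (Hpw : jle join p w) by apply jle_l.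
      assert (Hrw : jle join r w) by apply jle_r.
      assert (Hwt : jle join w t) by (apply jle_join; eapply jle_trans; eauto).
      assert (st1 : le t (phi p t a) (phi s t (psi q s b))).
      { rewrite <- (Hphi_comp p s t Hps Hst). apply (Hphi_mono s t Hst). exact H1. }
      assert (st2 : le t (phi s t (psi q s b)) (psi u t (phi q u b))) by (apply S1'; assumption).
      assert (st3 : le t (psi u t (phi q u b)) (psi r t c)).
      { rewrite <- (Hpsi_comp r u t Hru Hut). apply (Hpsi_mono u t Hut). exact H2. }
      apply (Refl w t Hwt).
      rewrite (Hphi_comp p w t Hpw Hwt), (Hpsi_comp r w t Hrw Hwt).
      eapply Ltrans; [exact st1|]. eapply Ltrans; [exact st2|exact st3].
    + intros [p a] [q b] H1 H2.
      apply (SL p q (join p q) eq_refl) in H1.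
      apply (SL q p (join p q) (Hcomm q p)) in H2.
      assert (K1 : le (join p q) (phi p _ a) (psi p _ a)).
      { eapply Ltrans; [exact H1|]. eapply Ltrans; [apply PsiPhi, jle_r|exact H2]. }
      assert (K2 : le (join p q) (phi q _ b) (psi q _ b)).
      { eapply Ltrans; [exact H2|]. eapply Ltrans; [apply PsiPhi, jle_l|exact H1]. }
      assert (E1 : p = join p q).
      { destruct (classic (p = join p q)) as [E|E]; auto.
        exfalso. destruct (S2 p (join p q) (conj (jle_l p q) E) a a K1) as [_ C]. auto. }
      assert (E2 : q = join p q).
      { destruct (classic (q = join p q)) as [E|E]; auto.
        exfalso. destruct (S2 q (join p q) (conj (jle_r p q) E) b b K2) as [_ C]. auto. }
      assert (Epq : p = q) by congruence. subst q.
      assert (H1' : le p a b) by (apply Hrestr, (SL p p (join p p) eq_refl); exact H1).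
      assert (H2' : le p b a) by (apply Hrestr, (SL p p (join p p) (Hcomm p p)); exact H2).
      assert (a = b) by (apply (Hle p); assumption). subst b. reflexivity.
Qed.
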